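(* Let $\lambda\in k$. (i) Suppose $(A,\circ,P,\omega)$ is a Rota–Baxter symplectic Leibniz algebra of weight $\lambda$. Define $\succ,\prec$ on $A$ by $\omega(x\prec y,z)=\omega(x,y\circ z+z\circ y)$ and $\omega(x\succ y,z)=-\omega(y,x\circ z)$ for all $x,y,z$ (these define a Leibniz-dendriform algebra with associated Leibniz algebra $(A,\circ)$). Then $(A,\succ,\prec,P,\omega)$ is a quadratic Rota–Baxter Leibniz-dendriform algebra of weight $\lambda$. (ii) Conversely, if $(A,\succ,\prec,P,\omega)$ is a quadratic Rota–Baxter Leibniz-dendriform algebra of weight $\lambda$, then $(A,\circ,P,\omega)$ with $\circ=\succ+\prec$ is a Rota–Baxter symplectic Leibniz algebra of weight $\lambda$.
   Context: Vector spaces are finite-dimensional over a field $k$. A Leibniz algebra is a vector space with bilinear $\circ$ such that $x\circ(y\circ z)=(x\circ y)\circ z+y\circ(x\circ z)$. A symplectic Leibniz algebra is a Leibniz algebra $(A,\circ)$ with a non-degenerate symmetric bilinear form $\omega$ such that $\omega(z,x\circ y)=-\omega(y,x\circ z)+\omega(x,y\circ z+z\circ y)$ for all $x,y,z$. A Rota–Baxter operator of weight $\lambda$ on $(A,\circ)$ is a linear $P$ with $P(x)\circ P(y)=P(P(x)\circ y+x\circ P(y)+\lambda x\circ y)$; $(A,\circ,P,\omega)$ is a Rota–Baxter symplectic Leibniz algebra of weight $\lambda$ if $(A,\circ,\omega)$ is symplectic, $P$ is a Rota–Baxter operator of weight $\lambda$ and $\omega(P(x),y)+\omega(x,P(y))+\lambda\omega(x,y)=0$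 for all $x,y$. A Leibniz-dendriform algebra is a vector space $A$ with bilinear operations $\succ,\prec$ such that, with $x\circ y:=x\succ y+x\prec y$, for all $x,y,z$: $(x\circ y)\succ z=x\succ(y\succ z)-y\succ(x\succ z)$, $y\prec(x\circ z)+(x\succ y)\prec z=x\succ(y\prec z)$, $x\prec(y\circ z)=(x\prec y)\prec z+y\succ(x\prec z)$. A quadratic Leibniz-dendriform algebra is one with a non-degenerate symmetric bilinear form $\omega$ with $\omega(x\prec y,z)=\omega(x,y\circ z+z\circ y)$ and $\omega(x\succ y,z)=-\omega(y,x\circ z)$ for all $x,y,z$. A Rota–Baxter operator of weight $\lambda$ on $(A,\succ,\prec)$ is a linear $P$ with $P(x)\succ P(y)=P(P(x)\succ y+x\succ P(y)+\lambda x\succ y)$ and $P(x)\prec P(y)=P(P(x)\prec y+x\prec P(y)+\lambda x\prec y)$. $(A,\succ,\prec,P,\omega)$ is a quadratic Rota–Baxter Leibniz-dendriform algebra of weight $\lambda$ if $(A,\succ,\prec,\omega)$ is quadratic, $P$ is a Rota–Baxter operator of weight $\lambda$, and $\omega(P(x),y)+\omega(x,P(y))+\lambda\omega(x,y)=0$ for all $x,y$. *)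

(* Defs.v *)
From HB Require Import structures.
From mathcomp Require Import all_boot all_order all_algebra.
Set Implicit Arguments. Unset Strict Implicit. Unset Printing Implicit Defensive.
Import GRing.Theory.
Local Open Scope ring_scope.

Section Defs.
Variables (K : fieldType) (V : vectType K).

Definition linear_map (f : V -> V) : Prop :=
  forall (a : K) (x y : V), f (a *: x + y) = a *: f x + f y.

Definition bilinear_op (m : V -> V -> V) : Prop :=
  (forall (a : K) (x y z : V), m (a *: x + y) z = a *: m x z + m y z) /\
  (forall (a : K) (x y z : V), m z (a *: x + y) = a *: m z x + m z y).

Definition bilinear_form (w : V -> V -> K) : Prop :=
  (forall (a : K) (x y z : V), w (a *: x + y) z = a * w x z + w y z) /\
  (forall (a : K) (x y z : V), w z (a *: x + y) = a * w z x + w z y).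

Definition symmetric_form (w : V -> V -> K) : Prop :=
  forall x y, w x y = w y x.

Definition nondegenerate (w : V -> V -> K) : Prop :=
  forall x, (forall y, w x y = 0) -> x = 0.

Definition leibniz_algebra (m : V -> V -> V) : Prop :=
  bilinear_op m /\
  forall x y z, m x (m y z) = m (m x y) z + m y (m x z).

Definition symplectic_leibniz (m : V -> V -> V) (w : V -> V -> K) : Prop :=
  [/\ leibniz_algebra m, bilinear_form w, symmetric_form w, nondegenerate w &
      forall x y z, w z (m x y) = - w y (m x z) + w x (m y z + m z y)].

Definition rota_baxter_op (m : V -> V -> V) (P : V -> V) (lam : K) : Prop :=
  linear_map P /\
  forall x y, m (P x) (P y) = P (m (P x) y + m x (P y) + lam *: m x y).

Definition compat_RB_form (P : V -> V) (w : V -> V -> K) (lam : K) : Prop :=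
  forall x y, w (P x) y + w x (P y) + lam * w x y = 0.

Definition RB_symplectic_leibniz (m : V -> V -> V) (P : V -> V)
    (w : V -> V -> K) (lam : K) : Prop :=
  [/\ symplectic_leibniz m w, rota_baxter_op m P lam & compat_RB_form P w lam].

Definition ld_circ (sc pr : V -> V -> V) : V -> V -> V :=
  fun x y => sc x y + pr x y.

Definition leibniz_dendriform (sc pr : V -> V -> V) : Prop :=
  let c := ld_circ sc pr in
  [/\ bilinear_op sc /\ bilinear_op pr,
      (forall x y z, sc (c x y) z = sc x (sc y z) - sc y (sc x z)),
      (forall x y z, pr y (c x z) + pr (sc x y) z = sc x (pr y z)) &
      (forall x y z, pr x (c y z) = pr (pr x y) z + sc y (pr x z))].

Definition quadratic_LD (sc pr : V -> V -> V) (w : V -> V -> K) : Prop :=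
  let c := ld_circ sc pr in
  [/\ leibniz_dendriform sc pr, bilinear_form w, symmetric_form w /\
      nondegenerate w,
      (forall x y z, w (pr x y) z = w x (c y z + c z y)) &
      (forall x y z, w (sc x y) z = - w y (c x z))].

Definition rota_baxter_LD (sc pr : V -> V -> V) (P : V -> V) (lam : K) : Prop :=
  [/\ linear_map P,
      (forall x y, sc (P x) (P y) = P (sc (P x) y + sc x (P y) + lam *: sc x y)) &
      (forall x y, pr (P x) (P y) = P (pr (P x) y + pr x (P y) + lam *: pr x y))].

Definition quadratic_RB_LD (sc pr : V -> V -> V) (P : V -> V)
    (w : V -> V -> K) (lam : K) : Prop :=
  [/\ quadratic_LD sc pr w, rota_baxter_LD sc pr P lam & compat_RB_form P w lam].

End Defs.

(* Main.v *)
Require Import Defs.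
From HB Require Import structures.
From mathcomp Require Import all_boot all_order all_algebra.
From mathcomp Require Import ring.
Import GRing.Theory.
Local Open Scope ring_scope.
Set Implicit Arguments.

Section Helpers.
Variables (K : fieldType) (V : vectType K).

Section LinV.
Variable (f : V -> V).
Hypothesis Hf : forall a x y, f (a *: x + y) = a *: f x + f y.
Lemma lin0 : f 0 = 0.
Proof. have h := Hf 1 0 0; rewrite !scale1r addr0 in h.
by apply: (addrI (f 0)); rewrite addr0 -h. Qed.
Lemma linD x y : f (x + y) = f x + f y.
Proof. by have := Hf 1 x y; rewrite !scale1r. Qed.
Lemma linZ a x : f (a *: x) = a *: f x.
Proof. by have := Hf a x 0; rewrite !addr0 lin0 addr0. Qed.
Lemma linN x : f (- x) = - f x.
Proof. by rewrite -scaleN1r linZ scaleN1r. Qed.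
End LinV.

Section LinK.
Variable (f : V -> K).
Hypothesis Hf : forall a x y, f (a *: x + y) = a * f x + f y.
Lemma klin0 : f 0 = 0.
Proof. have h := Hf 1 0 0; rewrite scale1r addr0 mul1r in h.
by apply: (addrI (f 0)); rewrite addr0 -h. Qed.
Lemma klinD x y : f (x + y) = f x + f y.
Proof. by have := Hf 1 x y; rewrite scale1r mul1r. Qed.
Lemma klinZ a x : f (a *: x) = a * f x.
Proof. by have := Hf a x 0; rewrite !addr0 klin0 addr0. Qed.
Lemma klinN x : f (- x) = - f x.
Proof. by rewrite -scaleN1r klinZ mulN1r. Qed.
End LinK.

Section BF.
Variable (w : V -> V -> K).
Hypothesis Hw : bilinear_form w.
Lemma bfDl x y z : w (x + y) z = w x z + w y z.
Proof. exact: (@klinD (fun v => w v z) (fun a x y => (proj1 Hw) a x y z)). Qed.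
Lemma bfNl x z : w (- x) z = - w x z.
Proof. exact: (@klinN (fun v => w v z) (fun a x y => (proj1 Hw) a x y z)). Qed.
Lemma bfZl a x z : w (a *: x) z = a * w x z.
Proof. exact: (@klinZ (fun v => w v z) (fun a x y => (proj1 Hw) a x y z)). Qed.
Lemma bfDr x y z : w z (x + y) = w z x + w z y.
Proof. exact: (@klinD (fun v => w z v) (fun a x y => (proj2 Hw) a x y z)). Qed.
Lemma bfNr x z : w z (- x) = - w z x.
Proof. exact: (@klinN (fun v => w z v) (fun a x y => (proj2 Hw) a x y z)). Qed.
Lemma bfZr a x z : w z (a *: x) = a * w z x.
Proof. exact: (@klinZ (fun v => w z v) (fun a x y => (proj2 Hw) a x y z)). Qed.
Hypothesis Hnd : Defs.nondegenerate w.
Lemma bf_ext a b : (forall u, w a u = w b u) -> a = b.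
Proof.
move=> H; apply/eqP; rewrite -subr_eq0; apply/eqP; apply: Hnd => u.
by rewrite bfDl bfNl H subrr.
Qed.
End BF.

Section BO.
Variable (m : V -> V -> V).
Hypothesis Hm : bilinear_op m.
Lemma boDl x y z : m (x + y) z = m x z + m y z.
Proof. exact: (@linD (fun v => m v z) (fun a x y => (proj1 Hm) a x y z)). Qed.
Lemma boNl x z : m (- x) z = - m x z.
Proof. exact: (@linN (fun v => m v z) (fun a x y => (proj1 Hm) a x y z)). Qed.
Lemma boZl a x z : m (a *: x) z = a *: m x z.
Proof. exact: (@linZ (fun v => m v z) (fun a x y => (proj1 Hm) a x y z)). Qed.
Lemma boDr x y z : m z (x + y) = m z x + m z y.
Proof. exact: (@linD (fun v => m z v) (fun a x y => (proj2 Hm) a x y z)). Qed.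
Lemma boNr x z : m z (- x) = - m z x.
Proof. exact: (@linN (fun v => m z v) (fun a x y => (proj2 Hm) a x y z)). Qed.
Lemma boZr a x z : m z (a *: x) = a *: m z x.
Proof. exact: (@linZ (fun v => m z v) (fun a x y => (proj2 Hm) a x y z)). Qed.
End BO.

Section LM.
Variable (P : V -> V).
Hypothesis HP : linear_map P.
Lemma lmD x y : P (x + y) = P x + P y. Proof. exact: linD. Qed.
Lemma lmN x : P (- x) = - P x. Proof. exact: linN. Qed.
Lemma lmZ a x : P (a *: x) = a *: P x. Proof. exact: linZ. Qed.
End LM.

Lemma compatL (P : V -> V) (w : V -> V -> K) lam :
  compat_RB_form P w lam -> forall a b, w (P a) b = - w a (P b) - lam * w a b.
Proof.
move=> H a b; have h := H a b.
apply/eqP; rewrite -subr_eq0; apply/eqP; rewrite -h; ring.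
Qed.

End Helpers.
Unset Implicit Arguments.

Lemma lin_comb (K : fieldType) (a b c : K) : c = 0 -> a - b = c -> a = b.
Proof. by move=> -> /eqP; rewrite subr_eq0 => /eqP. Qed.

Ltac exp1 Hw Hbm HP Hsc Hpr wPl :=
  rewrite ?(bfDl Hw, bfNl Hw, bfZl Hw, Hsc, Hpr, wPl, bfDr Hw, bfNr Hw, bfZr Hw,
            boDl Hbm, boDr Hbm, boNl Hbm, boNr Hbm, boZl Hbm, boZr Hbm,
            lmD HP, lmN HP, lmZ HP).

Ltac exp2 Hw Hbs Hbp HP :=
  rewrite ?(bfDl Hw, bfNl Hw, bfZl Hw, bfDr Hw, bfNr Hw, bfZr Hw,
            boDl Hbs, boDr Hbs, boNl Hbs, boNr Hbs, boZl Hbs, boZr Hbs,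
            boDl Hbp, boDr Hbp, boNl Hbp, boNr Hbp, boZl Hbp, boZr Hbp,
            lmD HP, lmN HP, lmZ HP).

Theorem mainTheorem14 (K : fieldType) (V : vectType K) (lam : K) :
  (forall (m : V -> V -> V) (P : V -> V) (w : V -> V -> K)
          (sc pr : V -> V -> V),
      RB_symplectic_leibniz m P w lam ->
      (forall x y z, w (pr x y) z = w x (m y z + m z y)) ->
      (forall x y z, w (sc x y) z = - w y (m x z)) ->
      (forall x y, ld_circ sc pr x y = m x y) /\
      quadratic_RB_LD sc pr P w lam) /\
  (forall (sc pr : V -> V -> V) (P : V -> V) (w : V -> V -> K),
      quadratic_RB_LD sc pr P w lam ->
      RB_symplectic_leibniz (ld_circ sc pr) P w lam).
Proof.
split.
- move=> m P w sc pr [[[Hbm HL] Hw Hsym Hnd Hsp] [HP HRB] Hcomp] Hpr Hsc.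
  have wPl := compatL Hcomp.
  have Hc : forall x y, ld_circ sc pr x y = m x y.
    move=> x y; apply: (bf_ext Hw Hnd) => u.
    by rewrite /ld_circ (bfDl Hw) Hsc Hpr (Hsym (m x y)) (Hsp x y u).
  split; first exact: Hc.
  split; [split; [split| exact: Hw | by split | | ] | split; [exact: HP | | ] | exact: Hcomp].
  + split; split=> a x y z; apply: (bf_ext Hw Hnd) => u;
      exp1 Hw Hbm HP Hsc Hpr wPl; ring.
  + move=> x y z; rewrite Hc; apply: (bf_ext Hw Hnd) => u.
    exp1 Hw Hbm HP Hsc Hpr wPl; rewrite (HL x y u).
    exp1 Hw Hbm HP Hsc Hpr wPl; ring.
  + move=> x y z; rewrite Hc; apply: (bf_ext Hw Hnd) => u.
    exp1 Hw Hbm HP Hsc Hpr wPl; rewrite (HL x z u) (HL x u z).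
    exp1 Hw Hbm HP Hsc Hpr wPl; ring.
  + move=> x y z; rewrite Hc; apply: (bf_ext Hw Hnd) => u.
    have E1 : m (m z u) y = m z (m u y) - m u (m z y) by rewrite HL addrK.
    have E2 : m (m u z) y = m u (m z y) - m z (m u y) by rewrite HL addrK.
    exp1 Hw Hbm HP Hsc Hpr wPl; rewrite (HL y z u) (HL y u z) E1 E2.
    exp1 Hw Hbm HP Hsc Hpr wPl; ring.
  + by move=> x y z; rewrite !Hc Hpr.
  + by move=> x y z; rewrite !Hc Hsc.
  + move=> x y; apply: (bf_ext Hw Hnd) => u.
    exp1 Hw Hbm HP Hsc Hpr wPl; rewrite (HRB x u).
    exp1 Hw Hbm HP Hsc Hpr wPl; ring.
  + move=> x y; apply: (bf_ext Hw Hnd) => u.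
    exp1 Hw Hbm HP Hsc Hpr wPl; rewrite (HRB y u) (HRB u y).
    exp1 Hw Hbm HP Hsc Hpr wPl; ring.
- move=> sc pr P w [[[[Hbs Hbp] H1 H2 H3] Hw [Hsym Hnd] Hpr Hsc] [HP Hs Hp] Hcomp].
  split; [split; [split | exact: Hw | exact: Hsym | exact: Hnd | ] | split; [exact: HP | ] | exact: Hcomp].
  + split=> a x y z; apply: (bf_ext Hw Hnd) => u; rewrite /ld_circ;
      exp2 Hw Hbs Hbp HP; ring.
  + move=> x y z; apply: (bf_ext Hw Hnd) => u.
    apply: (@lin_comb _ _ _ (- (w (sc (ld_circ sc pr x y) z) u - w (sc x (sc y z) - sc y (sc x z)) u)
       - (w (pr y (ld_circ sc pr x z) + pr (sc x y) z) u - w (sc x (pr y z)) u)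
       + (w (pr x (ld_circ sc pr y z)) u - w (pr (pr x y) z + sc y (pr x z)) u))).
      by rewrite H1 H2 H3 !subrr oppr0 !addr0.
    rewrite /ld_circ; exp2 Hw Hbs Hbp HP; ring.
  + move=> x y z; rewrite (Hsym z) {1}/ld_circ (bfDl Hw) Hsc Hpr //.
  + move=> x y; rewrite /ld_circ (Hs x y) (Hp x y); apply: (bf_ext Hw Hnd) => u.
    exp2 Hw Hbs Hbp HP; ring.
Qed.
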